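(* Let $q=\chi^{-1}(a)$ and let $m$ be an integer with $0\le m<|q|$ (where $|q|\in\{2,3,\dots\}\cup\{\infty\}$ is the order of $q$). Then $$V_2(\varepsilon)^{\otimes m}\cong\bigoplus_{i=0}^{[\frac m2]}\frac{m-2i+1}{m-i+1}\binom{m}{i}V_{m+1-2i}(\chi^i).$$
   Context: Let $k$ be an algebraically closed field of characteristic zero, $G$ a group, $a$ a central element of $G$, $\hat G$ the group of characters $G\to k^\times$ with identity $\varepsilon$, and $\chi\in\hat G$ with $\chi(a)\ne1$. $H=kG(\chi^{-1},a,0)$ is the Hopf algebra generated by the group $G$ and $x$ with $xg=\chi^{-1}(g)gx$, $\Delta(g)=g\otimes g$, $\Delta(x)=x\otimes a+1\otimes x$; tensor products of $H$-modules: $g(m\otimes n)=gm\otimes gn$, $x(m\otimes n)=xm\otimes an+m\otimes xn$. $V_t(\lambda)$ ($\lambda\in\hat G$, $t\ge1$) has basis $m_0,\dots,m_{t-1}$, $gm_i=\chi^i(g)\lambda(g)m_i$, $xm_i=m_{i+1}$ ($i\le t-2$), $xm_{t-1}=0$. $V^{\otimes 0}=V_1(\varepsilon)$ and $V^{\otimes m}$ is the $m$-fold tensor power; $[r]$ is the integer part; $cM$ denotes the direct sum of $c$ copies of $M$ (the coefficients here are nonnegative integers). *)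

(* Defs.v *)
From HB Require Import structures.
From mathcomp Require Import all_boot all_order all_algebra.

Set Implicit Arguments.
Unset Strict Implicit.
Unset Printing Implicit Defensive.

Import GRing.Theory.
Local Open Scope ring_scope.

(* Modules over H = kG(chi^{-1}, a, 0), represented concretely:
   a (finite-dimensional) module is a dimension d, the action of each
   group element g as a d x d matrix, and the action of x as a d x d matrix.
   Convention: matrices act on COLUMN vectors (v |-> A *m v), so the
   i-th basis vector is the i-th standard column vector. *)

Section HopfModules.

Variables (k : fieldType) (G : groupType) (a : G) (chi : G -> k).

Definition is_char (l : G -> k) : Prop :=
  (forall g h : G, l (g * h)%g = l g * l h) /\ (forall g : G, l g != 0).

Definition eps : G -> k := fun _ => 1.

Record hmod := HMod {
  hdim : nat;
  hact : G -> 'M[k]_hdim;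
  hx   : 'M[k]_hdim
}.

(* Kronecker product, basis e_i (x) f_j indexed via mxvec_index i j *)
Definition kron m1 n1 m2 n2 (A : 'M[k]_(m1, n1)) (B : 'M[k]_(m2, n2))
  : 'M[k]_(m1 * m2, n1 * n2) :=
  \matrix_(r, c)
    (let ij := enum_val (cast_ord (esym (mxvec_cast m1 m2)) r) in
     let kl := enum_val (cast_ord (esym (mxvec_cast n1 n2)) c) in
     A ij.1 kl.1 * B ij.2 kl.2).

(* Tensor product: g(m (x) n) = gm (x) gn,  x(m (x) n) = xm (x) an + m (x) xn *)
Definition htens (M N : hmod) : hmod :=
  @HMod (hdim M * hdim N)
    (fun g => kron (hact M g) (hact N g))
    (kron (hx M) (hact N a) + kron 1%:M (hx N)).

Definition hdsum (M N : hmod) : hmod :=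
  @HMod (hdim M + hdim N)
    (fun g => block_mx (hact M g) 0 0 (hact N g))
    (block_mx (hx M) 0 0 (hx N)).

Definition hzero : hmod := @HMod 0 (fun _ => 0) 0.

Definition hdsum_seq (s : seq hmod) : hmod := foldr hdsum hzero s.

Definition hcopies (c : nat) (M : hmod) : hmod := hdsum_seq (nseq c M).

(* V_t(lambda): basis m_0..m_{t-1}, g m_i = chi^i(g) lambda(g) m_i,
   x m_i = m_{i+1} (i <= t-2), x m_{t-1} = 0 *)
Definition Vmod (t : nat) (l : G -> k) : hmod :=
  @HMod t
    (fun g => \matrix_(i < t, j < t)
                (if i == j then chi g ^+ i * l g else 0))
    (\matrix_(i < t, j < t) ((i : nat) == j.+1)%:R).

Fixpoint htpow (V : hmod) (n : nat) : hmod :=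
  match n with
  | 0 => Vmod 1 eps
  | n'.+1 => htens (htpow V n') V
  end.

Definition hiso (M N : hmod) : Prop :=
  exists (P : 'M[k]_(hdim N, hdim M)) (Q : 'M[k]_(hdim M, hdim N)),
    [/\ Q *m P = 1%:M, P *m Q = 1%:M,
        (forall g : G, P *m hact M g = hact N g *m P)
      & P *m hx M = hx N *m P].

End HopfModules.

(* Main.v *)
Require Import Defs.
From HB Require Import structures.
From mathcomp Require Import all_boot all_order all_algebra.
From mathcomp Require Import zify ring.
Set Implicit Arguments.
Unset Strict Implicit.
Unset Printing Implicit Defensive.
Import GRing.Theory.

Definition kidsN (q : nat * nat) : seq (nat * nat) :=
  (q.1.+1, q.2) :: (if (1 < q.1)%N then [:: (q.1.-1, q.2.+1)] else [::]).

Fixpoint TW m : seq (nat * nat) :=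
  if m is m'.+1 then flatten (map kidsN (TW m')) else [:: (1, 0)%N].

Definition bal m w := if w is w'.+1 then 'C(m, w) - 'C(m, w') else 1%N.
Definition fc m t w := if (t + w.*2 == m.+1) && (w.*2 <= m) then bal m w else 0%N.

Lemma ck t w t0 w0 : count_mem (t,w) (kidsN (t0,w0)) =
  (0 < t) * (((t0,w0) == (t.-1, w)) + (0 < w) * ((t0,w0) == (t.+1, w.-1))).
Proof.
rewrite /kidsN /=; case: ifP => h; rewrite /= !xpair_eqE.
- case: (t0.+1 =P t) => [e1|n1]; case: (w0 =P w) => [e2|n2]; case: (t0.-1 =P t) => [e3|n3]; case: (w0.+1 =P w) => [e4|n4];
  case: (t0 =P t.-1) => [e5|n5]; case: (t0 =P t.+1) => [e6|n6]; case: (w0 =P w.-1) => [e7|n7]; rewrite /=; lia.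
- case: (t0.+1 =P t) => [e1|n1]; case: (w0 =P w) => [e2|n2];
  case: (t0 =P t.-1) => [e5|n5]; case: (t0 =P t.+1) => [e6|n6]; case: (w0 =P w.-1) => [e7|n7]; rewrite /=; lia.
Qed.

Arguments kidsN : simpl never.

Lemma cnt_step L t w :
  count_mem (t, w) (flatten (map kidsN L)) =
  (0 < t) * (count_mem (t.-1, w) L + (0 < w) * count_mem (t.+1, w.-1) L).
Proof.
elim: L => [|[t0 w0] L IH]; first by rewrite /= !muln0.
have -> : flatten (map kidsN ((t0,w0)::L)) = kidsN (t0,w0) ++ flatten (map kidsN L) by [].
rewrite count_cat IH ck /=; ring.
Qed.

Lemma binmono m j : j.+1 + j.+1 <= m.+1 -> 'C(m, j) <= 'C(m, j.+1).
Proof. move=> h2; have h := mul_bin_left m j; nia. Qed.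
Lemma bineq m j : j.+1 + j.+1 = m.+1 -> 'C(m, j.+1) = 'C(m, j).
Proof. move=> h2; have h := mul_bin_left m j; nia. Qed.

Lemma fc_step m t w :
  fc m.+1 t w = (0 < t) * (fc m t.-1 w + (0 < w) * fc m t.+1 w.-1).
Proof.
rewrite /fc -!muln2.
case: t => [|t]; first by case: ifP => //; lia.
case: w => [|w] /=.
  by rewrite !mul0n !addn0 !mul1n eqSS !leq0n !andbT.
idtac.
case: (t.+1 + w.+1 * 2 =P m.+2) => [e|n] /=; last first.
  case: ifP; case: ifP => //; lia.
have -> : t + w.+1 * 2 == m.+1 by apply/eqP; lia.
have -> : t.+2 + w * 2 == m.+1 by apply/eqP; lia.
have -> : w.+1 * 2 <= m.+1 by lia.
have -> : w * 2 <= m by lia.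
rewrite /= !binS.
have hB : 'C(m, w.-1) * (0 < w) <= 'C(m, w).
  case: w e => [|w] e; first by rewrite muln0.
  rewrite muln1; apply: binmono; lia.
have hBw : bal m w = 'C(m, w) - 'C(m, w.-1) * (0 < w).
  by case: w e hB => [|w] _ _ //=; rewrite ?bin0 ?muln1.
have hC : 'C(m.+1, w) = 'C(m, w) + 'C(m, w.-1) * (0 < w).
  by case: w e {hB hBw} => [|w] _ /=; rewrite ?bin0 ?muln0 ?addn0 ?binS ?muln1.
rewrite hC hBw.
case: ifP => h.
  have := binmono (j := w) (m := m); lia.
have := bineq (j := w) (m := m); lia.
Qed.

Lemma cnt_TW m t w : count_mem (t, w) (TW m) = fc m t w.
Proof.
elim: m t w => [|m IH] t w.
  rewrite /= /fc -muln2 addn0 xpair_eqE.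
  case: w => [|w]; case: t => [|[|t]] //=; by rewrite ?muln0 ?andbF.
change (count_mem (t,w) (flatten (map kidsN (TW m))) = fc m.+1 t w).
by rewrite cnt_step !IH fc_step.
Qed.

Lemma TW_bound m q : q \in TW m -> 0 < q.1 <= m.+1.
Proof.
elim: m q => [|m IH] q /=; first by rewrite mem_seq1 => /eqP ->.
case/flattenP => l /mapP [q' hq' ->].
have := IH q' hq'; case: q' {hq'} => t w /= h.
rewrite /kidsN /= in_cons => /orP [/eqP -> /=| ]; first lia.
case: ifP => // h1; rewrite mem_seq1 => /eqP -> /=; lia.
Qed.

Lemma TW_form m q : q \in TW m -> q.1 + q.2.*2 = m.+1 /\ q.2.*2 <= m.
Proof.
move=> hq; have : 0 < fc m q.1 q.2.
  by rewrite -cnt_TW -surjective_pairing -has_count has_pred1.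
rewrite /fc; case: ifP => [/andP [/eqP h1 h2]|] //.
Qed.

Lemma sum_TW m : sumn (map fst (TW m)) = 2 ^ m.
Proof.
elim: m => [//|m IH].
have : forall q, q \in TW m -> 0 < q.1 by move=> q /TW_bound /andP [].
rewrite expnS -IH /=; elim: (TW m) => [//|[t w] L IHL] hL /=.
rewrite map_cat sumn_cat IHL => [|q hq]; last by apply: hL; rewrite in_cons hq orbT.
have := hL (t, w) (mem_head _ _); rewrite /kidsN /=.
case: ifP => h1 h2 /=; lia.
Qed.

Lemma sumn_keys (L K : seq (nat * nat)) : uniq K -> {subset L <= K} ->
  sumn (map fst L) = sumn [seq count_mem x L * x.1 | x <- K].
Proof.
move=> uK; elim: L => [|y L IH] hs /=.
  by elim: K {uK hs} => //= x K ->.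
rewrite IH => [|z hz]; last by apply: hs; rewrite in_cons hz orbT.
have : y \in K by apply: hs; rewrite mem_head.
elim: K uK {hs IH} => [//|x K IHK] /= /andP [xK uK].
rewrite in_cons => /orP [/eqP ey|yK].
  subst y; rewrite eqxx /=.
  have -> : [seq ((x == x0) + count_mem x0 L) * x0.1 | x0 <- K] = [seq count_mem x0 L * x0.1 | x0 <- K].
    apply/eq_in_map => z hz /=; rewrite (_ : (x == z) = false) //.
    by apply/negbTE; apply: contra xK => /eqP ->.
  ring.
rewrite -(IHK uK yK).
rewrite (_ : (y == x) = false); last by apply/negbTE; apply: contra xK => /eqP <-.
rewrite add0n; ring.
Qed.

Lemma bal_div m i : i.*2 <= m -> ((m - 2 * i + 1) * 'C(m, i)) %/ (m - i + 1) = bal m i.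
Proof.
move=> h.
suff -> : (m - 2 * i + 1) * 'C(m, i) = (m - i + 1) * bal m i by rewrite mulKn // addn1.
case: i h => [|i] h /=; first by rewrite bin0 !muln1 muln0 subn0.
have h1 := mul_bin_left m i.
have h2 := binmono (m := m) (j := i).
rewrite -muln2 in h.
have h3 : 'C(m, i) <= 'C(m, i.+1) by apply: h2; lia.
nia.
Qed.

Local Open Scope ring_scope.

Section Kron.
Variable k : fieldType.

Definition pr m1 m2 (r : 'I_(m1 * m2)) : 'I_m1 * 'I_m2 :=
  enum_val (cast_ord (esym (mxvec_cast m1 m2)) r).
Definition unpr m1 m2 (p : 'I_m1 * 'I_m2) : 'I_(m1 * m2) :=
  cast_ord (mxvec_cast m1 m2) (enum_rank p).

Lemma prK m1 m2 : cancel (@pr m1 m2) (@unpr m1 m2).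
Proof. by move=> r; rewrite /pr /unpr enum_valK cast_ordKV. Qed.
Lemma unprK m1 m2 : cancel (@unpr m1 m2) (@pr m1 m2).
Proof. by move=> p; rewrite /pr /unpr cast_ordK enum_rankK. Qed.
Lemma pr_inj m1 m2 : injective (@pr m1 m2).
Proof. exact: can_inj (@prK m1 m2). Qed.

Lemma kronE m1 n1 m2 n2 (A : 'M[k]_(m1, n1)) (B : 'M[k]_(m2, n2)) r c :
  kron A B r c = A (pr r).1 (pr c).1 * B (pr r).2 (pr c).2.
Proof. by rewrite /kron mxE. Qed.

Lemma kron_mul m1 n1 p1 m2 n2 p2 (A : 'M[k]_(m1, n1)) (B : 'M[k]_(m2, n2))
  (C : 'M[k]_(n1, p1)) (D : 'M[k]_(n2, p2)) :
  kron A B *m kron C D = kron (A *m C) (B *m D).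
Proof.
apply/matrixP=> r c; rewrite kronE !mxE.
rewrite (reindex (@unpr n1 n2)); last by exists (@pr n1 n2) => x _; rewrite ?prK ?unprK.
rewrite (eq_bigr (fun p : 'I_n1 * 'I_n2 => kron A B r (unpr (p.1,p.2)) * kron C D (unpr (p.1, p.2)) c)); last by case.
rewrite -(pair_bigA _ (fun i j => kron A B r (unpr (i,j)) * kron C D (unpr (i, j)) c)) big_distrl /=.
apply: eq_bigr => i _; rewrite big_distrr /=; apply: eq_bigr => j _.
rewrite !kronE !unprK /=; ring.
Qed.

Lemma kronDl m1 n1 m2 n2 (A A' : 'M[k]_(m1, n1)) (B : 'M[k]_(m2, n2)) :
  kron (A + A') B = kron A B + kron A' B.
Proof. by apply/matrixP=> r c; rewrite !kronE !mxE ?kronE mulrDl. Qed.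
Lemma kronDr m1 n1 m2 n2 (A : 'M[k]_(m1, n1)) (B B' : 'M[k]_(m2, n2)) :
  kron A (B + B') = kron A B + kron A B'.
Proof. by apply/matrixP=> r c; rewrite !kronE !mxE ?kronE mulrDr. Qed.
Lemma kronZl m1 n1 m2 n2 (x : k) (A : 'M[k]_(m1, n1)) (B : 'M[k]_(m2, n2)) :
  kron (x *: A) B = x *: kron A B.
Proof. by apply/matrixP=> r c; rewrite !kronE !mxE ?kronE mulrA. Qed.
Lemma kronZr m1 n1 m2 n2 (x : k) (A : 'M[k]_(m1, n1)) (B : 'M[k]_(m2, n2)) :
  kron A (x *: B) = x *: kron A B.
Proof. by apply/matrixP=> r c; rewrite !kronE !mxE ?kronE mulrCA. Qed.
Lemma kron0l m1 n1 m2 n2 (B : 'M[k]_(m2, n2)) : kron (0 : 'M[k]_(m1, n1)) B = 0.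
Proof. by apply/matrixP=> r c; rewrite !kronE !mxE ?kronE mul0r. Qed.
Lemma kron0r m1 n1 m2 n2 (A : 'M[k]_(m1, n1)) : kron A (0 : 'M[k]_(m2, n2)) = 0.
Proof. by apply/matrixP=> r c; rewrite !kronE !mxE ?kronE mulr0. Qed.

End Kron.


Section Gen.
Variables (k : fieldType) (G : groupType) (chi : G -> k).
Local Notation hmod := (hmod k G).

Definition str n := ('cV[k]_n * nat * nat)%type.
Definition pw n (A : 'M[k]_n) j (v : 'cV[k]_n) := iter j (mulmx A) v.

Definition good (M : hmod) (s : str (hdim M)) :=
  pw (hx M) s.1.2 s.1.1 = 0 /\
  forall g j, hact M g *m pw (hx M) j s.1.1 = chi g ^+ (s.2 + j) *: pw (hx M) j s.1.1.

Definition strmx (M : hmod) (s : str (hdim M)) : 'M[k]_(hdim M, s.1.2) :=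
  \matrix_(i, j) (pw (hx M) j s.1.1) i 0.

Definition spanS (M : hmod) (S : seq (str (hdim M))) : 'M[k]_(hdim M) :=
  (\sum_(s <- S) <<(strmx s)^T>>)%MS.

Definition intertw (M N : hmod) (Q : 'M[k]_(hdim M, hdim N)) :=
  hx M *m Q = Q *m hx N /\ forall g, hact M g *m Q = Q *m hact N g.
Arguments intertw : clear implicits.

Lemma pwS n (A : 'M[k]_n) j v : pw A j.+1 v = A *m pw A j v.
Proof. by []. Qed.
Lemma pwSr n (A : 'M[k]_n) j v : pw A j.+1 v = pw A j (A *m v).
Proof. by rewrite /pw iterSr. Qed.
Lemma pw_add n (A : 'M[k]_n) i j v : pw A (i + j) v = pw A i (pw A j v).
Proof. by rewrite /pw iterD. Qed.
Lemma pw0v n (A : 'M[k]_n) j : pw A j 0 = 0.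
Proof. by elim: j => //= j IH; rewrite /pw /= -/(pw _ _ _) IH mulmx0. Qed.
Lemma pwD n (A : 'M[k]_n) j u v : pw A j (u + v) = pw A j u + pw A j v.
Proof. by elim: j => //= j IH; rewrite /pw /= -!/(pw _ _ _) IH mulmxDr. Qed.
Lemma pwZ n (A : 'M[k]_n) j (c : k) v : pw A j (c *: v) = c *: pw A j v.
Proof. by elim: j => //= j IH; rewrite /pw /= -!/(pw _ _ _) IH scalemxAr. Qed.
Lemma pw_ge n (A : 'M[k]_n) t j v : pw A t v = 0 -> (t <= j)%N -> pw A j v = 0.
Proof.
move=> h /subnK <-; by rewrite pw_add h pw0v.
Qed.

Lemma intertw_str (M : hmod) (s : str (hdim M)) : good s ->
  intertw M (Vmod chi s.1.2 (fun g => chi g ^+ s.2)) (strmx s).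
Proof.
case: s => [[v t] w] /= [ht he]; split.
  apply/matrixP => i j; rewrite !mxE /=.
  have -> : \sum_(r < hdim M) hx M i r * strmx (M:=M) (v, t, w) r j = (pw (hx M) j.+1 v) i 0.
    by rewrite pwS mxE; apply: eq_bigr => r _; rewrite mxE.
  case: (ltnP j.+1 t) => hj.
    rewrite (bigD1 (Ordinal hj)) // big1 ?addr0 => [|c hc]; last first.
      rewrite !mxE; case: eqP => [e|]; last by rewrite mulr0.
      by case/eqP: hc; apply/val_inj.
    by rewrite !mxE /= eqxx mulr1 addr0.
  rewrite (pw_ge ht hj) mxE big1 // => c _; rewrite !mxE.
  case: eqP => [e|]; last by rewrite mulr0.
  by move: (ltn_ord c); rewrite e ltnNge hj.
move=> g; apply/matrixP => i j; rewrite !mxE /=.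
have -> : \sum_(r < hdim M) hact M g i r * strmx (M:=M) (v, t, w) r j = (hact M g *m pw (hx M) j v) i 0.
  by rewrite mxE; apply: eq_bigr => r _; rewrite mxE.
rewrite he.
rewrite (bigD1 j) //= !mxE eqxx big1 ?addr0 => [|c hc]; last first.
  by rewrite !mxE (negbTE hc) mulr0.
by rewrite exprD; ring.
Qed.

Lemma intertw_dsum (M N1 N2 : hmod) Q1 Q2 :
  intertw M N1 Q1 -> intertw M N2 Q2 -> intertw M (hdsum N1 N2) (row_mx Q1 Q2).
Proof.
move=> [h1 g1] [h2 g2]; split => [|g] /=;
  by rewrite mul_mx_row mul_row_block !mulmx0 addr0 add0r ?h1 ?h2 ?g1 ?g2.
Qed.

Lemma intertw_zero (M : hmod) : intertw M (hzero k G) 0.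
Proof. by split => [|g]; rewrite !thinmx0. Qed.

Lemma spanS_cons (M : hmod) s (S : seq (str (hdim M))) :
  spanS (s :: S) = (<<(strmx s)^T>> + spanS S)%MS.
Proof. by rewrite /spanS big_cons. Qed.

Lemma spanS_nil (M : hmod) : spanS (M:=M) [::] = 0.
Proof. by rewrite /spanS big_nil. Qed.

Lemma spanS_cat (M : hmod) (S1 S2 : seq (str (hdim M))) :
  spanS (S1 ++ S2) = (spanS S1 + spanS S2)%MS.
Proof. by rewrite /spanS big_cat. Qed.

Lemma spanS_subP (M : hmod) (S : seq (str (hdim M))) m (X : 'M_(m, hdim M)) :
  (forall s, s \in S -> ((strmx s)^T <= X)%MS) -> (spanS S <= X)%MS.
Proof.
elim: S => [|s S IH] h; first by rewrite spanS_nil sub0mx.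
rewrite spanS_cons addsmx_sub genmxE h ?mem_head //= IH // => s' hs'.
by apply: h; rewrite in_cons hs' orbT.
Qed.

Lemma spanS_mem (M : hmod) (S : seq (str (hdim M))) s :
  s \in S -> ((strmx s)^T <= spanS S)%MS.
Proof.
elim: S => [//|s' S IH]; rewrite in_cons spanS_cons => /orP [/eqP -> | h].
  by apply: submx_trans (addsmxSl _ _); rewrite genmxE.
exact: submx_trans (IH h) (addsmxSr _ _).
Qed.

Lemma spanS_subset (M : hmod) (S1 S2 : seq (str (hdim M))) :
  {subset S1 <= S2} -> (spanS S1 <= spanS S2)%MS.
Proof. by move=> h; apply: spanS_subP => s /h; apply: spanS_mem. Qed.

Lemma copies_ex (M : hmod) t w (S : seq (str (hdim M))) :
  (forall s, s \in S -> good s /\ s.1.2 = t /\ s.2 = w) ->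
  exists Q : 'M_(hdim M, hdim (hcopies (size S) (Vmod chi t (fun g => chi g ^+ w)))),
    intertw M _ Q /\ (spanS S <= Q^T)%MS.
Proof.
elim: S => [|s S IH] h.
  by exists 0; split; [exact: intertw_zero | rewrite spanS_nil sub0mx].
have [Q [hQ sQ]] : exists Q : 'M_(hdim M, hdim (hcopies (size S) (Vmod chi t (fun g => chi g ^+ w)))),
    intertw M _ Q /\ (spanS S <= Q^T)%MS.
  by apply: IH => s' hs'; apply: h; rewrite in_cons hs' orbT.
have [gs [ts ws]] := h s (mem_head _ _).
case: s gs ts ws {h} => [[v t'] w'] /= gs ts ws; subst t' w'.
exists (row_mx (strmx (M:=M) (v, t, w)) Q); split.
  exact: intertw_dsum (intertw_str gs) hQ.
rewrite spanS_cons tr_row_mx -addsmxE.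
by apply: addsmxS => //; rewrite genmxE.
Qed.

Lemma seqs_ex (M : hmod) (X : eqType) (L : seq X) (N : X -> hmod)
    (SS : X -> seq (str (hdim M))) :
  (forall x, x \in L -> exists Q : 'M_(hdim M, hdim (N x)),
      intertw M _ Q /\ (spanS (SS x) <= Q^T)%MS) ->
  exists Q : 'M_(hdim M, hdim (hdsum_seq (map N L))),
      intertw M _ Q /\ (spanS (flatten (map SS L)) <= Q^T)%MS.
Proof.
elim: L => [|x L IH] h.
  by exists 0; split; [exact: intertw_zero | rewrite spanS_nil sub0mx].
have [Q [hQ sQ]] := IH (fun y hy => h y (@mem_behead _ (x :: L) _ hy)).
have [Q1 [hQ1 sQ1]] := h x (mem_head _ _).
exists (row_mx Q1 Q); split; first exact: intertw_dsum.
by rewrite /= spanS_cat tr_row_mx -addsmxE; apply: addsmxS.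
Qed.

Lemma final_iso (M N : hmod) (Q : 'M_(hdim M, hdim N)) :
  intertw M N Q -> (1%:M <= Q^T)%MS -> hdim M = hdim N -> hiso M N.
Proof.
move=> [hx' hg] hfull hdimE.
rewrite sub1mx in hfull.
have [B hB] := row_fullP hfull.
have QP : Q *m B^T = 1%:M by rewrite -[Q]trmxK -trmx_mul hB trmx1.
have rf : row_free Q^T.
  by rewrite /row_free mxrank_tr -[\rank Q]mxrank_tr (eqP hfull) hdimE.
have PQ : B^T *m Q = 1%:M.
  have h0 : (B^T *m Q - 1%:M)^T = 0.
    apply: (row_free_inj rf) => /=.
    by rewrite mul0mx -trmx_mul mulmxBr mulmxA QP mul1mx mulmx1 subrr trmx0.
  by apply/eqP; rewrite -subr_eq0; apply/eqP; rewrite -[LHS]trmxK h0 trmx0.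
exists B^T, Q; split => // [g|].
  by rewrite -[_ *m hact M g]mulmx1 -QP !mulmxA -(mulmxA _ _ Q) hg mulmxA PQ mul1mx.
by rewrite -[_ *m hx M]mulmx1 -QP !mulmxA -(mulmxA _ _ Q) hx' mulmxA PQ mul1mx.
Qed.

End Gen.


Section Step.
Variables (k : fieldType) (G : groupType) (a : G) (chi : G -> k).
Local Notation hmod := (hmod k G).
Local Notation V := (Vmod chi 2 (@eps k G)).
Local Notation p := (chi a).

Definition e0 : 'cV[k]_2 := delta_mx 0 0.
Definition e1 : 'cV[k]_2 := delta_mx 1 0.

Lemma ord2E (i : 'I_2) : i = 0 \/ i = 1.
Proof. by case: i => [[|[|//]]] h; [left|right]; apply/val_inj. Qed.

Lemma hactV0 g : hact V g *m e0 = e0.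
Proof.
apply/matrixP => i j; rewrite !mxE (bigD1 0) //= big1 => [|c hc]; last by rewrite !mxE (negbTE hc) mulr0.
rewrite !mxE ord1 /=; case: (ord2E i) => -> /=; by rewrite /eps ?mulr1 ?mul0r ?addr0.
Qed.
Lemma hactV1 g : hact V g *m e1 = chi g *: e1.
Proof.
apply/matrixP => i j; rewrite !mxE (bigD1 1) //= big1 => [|c hc]; last by rewrite !mxE (negbTE hc) mulr0.
rewrite !mxE ord1 /=; case: (ord2E i) => -> /=; by rewrite /eps ?mulr1 ?mul0r ?addr0 ?expr1 ?mulr0.
Qed.
Lemma hxV0 : hx V *m e0 = e1.
Proof.
apply/matrixP => i j; rewrite !mxE (bigD1 0) //= big1 => [|c hc]; last by rewrite !mxE (negbTE hc) mulr0.
rewrite !mxE ord1 /=; case: (ord2E i) => -> /=; by rewrite ?mulr1 ?mul0r ?addr0.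
Qed.
Lemma hxV1 : hx V *m e1 = 0.
Proof.
apply/matrixP => i j; rewrite !mxE (bigD1 1) //= big1 => [|c hc]; last by rewrite !mxE (negbTE hc) mulr0.
rewrite !mxE ord1 /=; case: (ord2E i) => -> /=; by rewrite ?mulr1 ?mul0r ?addr0.
Qed.

Section M.
Variable M : hmod.
Local Notation T := (htens a M V).
Local Notation x := (hx M).

Lemma hxT (u : 'cV[k]_(hdim M)) (e : 'cV[k]_2) :
  hx T *m kron u e = kron (x *m u) (hact V a *m e) + kron u (hx V *m e) :> 'cV_(hdim M * 2).
Proof. by rewrite /= mulmxDl !kron_mul mul1mx. Qed.

Lemma hactT g (u : 'cV[k]_(hdim M)) (e : 'cV[k]_2) :
  hact T g *m kron u e = kron (hact M g *m u) (hact V g *m e) :> 'cV_(hdim M * 2).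
Proof. by rewrite /= kron_mul. Qed.

Definition qn n := \sum_(i < n) p ^+ i.
Lemma qn0 : qn 0 = 0. Proof. by rewrite /qn big_ord0. Qed.
Lemma qnS n : qn n.+1 = 1 + p * qn n.
Proof.
rewrite /qn big_ord_recl expr0 mulr_sumr; congr (_ + _); by apply: eq_bigr => i _; rewrite lift0 exprS.
Qed.
Lemma qnSr n : qn n.+1 = qn n + p ^+ n.
Proof. by rewrite /qn big_ord_recr. Qed.

Lemma pwT0 n (v : 'cV[k]_(hdim M)) :
  pw (hx T) n (kron v e0) = kron (pw x n v) e0 + qn n *: kron (pw x n.-1 v) e1 :> 'cV_(hdim M * 2).
Proof.
elim: n => [|n IH]; first by rewrite qn0 scale0r addr0.
rewrite pwS IH mulmxDr hxT hactV0 hxV0 -scalemxAr hxT hactV1 hxV1 kron0r addr0.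
case: n IH => [|n] IH.
  by rewrite qn0 !scale0r addr0 qnS qn0 mulr0 addr0 scale1r.
rewrite kronZr scalerA -pwS -addrA; congr (_ + _).
by rewrite -{1}[kron _ e1]scale1r -scalerDl [qn n.+2]qnS mulrC.
Qed.

Lemma pwT1 n (v : 'cV[k]_(hdim M)) :
  pw (hx T) n (kron v e1) = p ^+ n *: kron (pw x n v) e1 :> 'cV_(hdim M * 2).
Proof.
elim: n => [|n IH]; first by rewrite scale1r.
rewrite pwS IH -scalemxAr hxT hactV1 hxV1 kron0r addr0 kronZr scalerA -pwS.
by rewrite exprSr.
Qed.

Definition kid1 (s : str k (hdim M)) : str k (hdim T) :=
  (kron s.1.1 e0, s.1.2.+1, s.2).
Definition kid2 (s : str k (hdim M)) : str k (hdim T) :=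
  (p ^+ s.1.2.-1 *: kron (x *m s.1.1) e0 - qn s.1.2.-1 *: kron s.1.1 e1,
   s.1.2.-1, s.2.+1).
Definition kids (s : str k (hdim M)) : seq (str k (hdim T)) :=
  kid1 s :: (if (1 < s.1.2)%N then [:: kid2 s] else [::]).

Lemma pwT2 n (v : 'cV[k]_(hdim M)) t :
  pw (hx T) n (p ^+ t *: kron (x *m v) e0 - qn t *: kron v e1) =
  p ^+ t *: (kron (pw x n.+1 v) e0 + qn n *: kron (pw x n v) e1)
   - (qn t * p ^+ n) *: kron (pw x n v) e1 :> 'cV_(hdim M * 2).
Proof.
rewrite pwD -scaleNr !pwZ pwT0 pwT1 scaleNr scalerA -pwSr.
case: n => [|n]; first by rewrite qn0 !scale0r.
by rewrite -pwSr.
Qed.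

Definition eig n (A : 'M[k]_n) (l : k) (z : 'cV[k]_n) := A *m z = l *: z.
Lemma eigD n (A : 'M[k]_n) l z1 z2 : eig A l z1 -> eig A l z2 -> eig A l (z1 + z2).
Proof. by rewrite /eig mulmxDr scalerDr => -> ->. Qed.
Lemma eigZ n (A : 'M[k]_n) l c z : eig A l z -> eig A l (c *: z).
Proof. by rewrite /eig -scalemxAr => ->; rewrite !scalerA mulrC. Qed.
Lemma eigN n (A : 'M[k]_n) l z : eig A l z -> eig A l (- z).
Proof. by rewrite /eig mulmxN scalerN => ->. Qed.
Lemma eigB n (A : 'M[k]_n) l z1 z2 : eig A l z1 -> eig A l z2 -> eig A l (z1 - z2).
Proof. by move=> h1 h2; apply: eigD h1 (eigN h2). Qed.

Lemma eigT0 g (u : 'cV[k]_(hdim M)) l :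
  eig (hact M g) l u -> eig (hact T g) l (kron u e0 : 'cV_(hdim M * 2)).
Proof. by rewrite /eig hactT hactV0 => ->; rewrite kronZl. Qed.
Lemma eigT1 g (u : 'cV[k]_(hdim M)) l :
  eig (hact M g) l u -> eig (hact T g) (l * chi g) (kron u e1 : 'cV_(hdim M * 2)).
Proof. by rewrite /eig hactT hactV1 => ->; rewrite kronZl kronZr scalerA. Qed.

Lemma good_kid1 s : good chi s -> good chi (kid1 s).
Proof.
case: s => [[v t] w] [/= ht he]; split.
  change (pw (hx T) t.+1 (kron v e0 : 'cV_(hdim M * 2)) = 0).
  by rewrite pwT0 (pw_ge ht (leqnSn t)) /= ht !kron0l scaler0 addr0.
move=> g j; change (eig (hact T g) (chi g ^+ (w + j)) (pw (hx T) j (kron v e0 : 'cV_(hdim M * 2)))).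
rewrite pwT0; apply: eigD; first by apply: eigT0; exact: he.
case: j => [|j]; first by rewrite qn0 !scale0r /eig mulmx0 scaler0.
apply: eigZ; rewrite addnS exprSr; apply: eigT1; exact: he.
Qed.

Lemma good_kid2 s : good chi s -> good chi (kid2 s).
Proof.
case: s => [[v t] w] [/= ht he]; split.
  change (pw (hx T) t.-1 (p ^+ t.-1 *: kron (x *m v) e0 - qn t.-1 *: kron v e1 : 'cV_(hdim M * 2)) = 0).
  rewrite pwT2; case: t ht he => [|t] ht he /=.
    by rewrite qn0 mul0r scale0r subr0 addr0 (_ : x *m v = 0) ?kron0l ?scaler0 // -[v]/(pw x 0 v) ht mulmx0.
  by rewrite (_ : x *m pw x t v = 0) // kron0l add0r scalerA mulrC subrr.
move=> g j; change (eig (hact T g) (chi g ^+ (w.+1 + j)) (pw (hx T) j (p ^+ t.-1 *: kron (x *m v) e0 - qn t.-1 *: kron v e1 : 'cV_(hdim M * 2)))).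
rewrite pwT2; apply: eigB.
  apply: eigZ; apply: eigD.
    by rewrite addSnnS; apply: eigT0; exact: he.
  by apply: eigZ; rewrite addSn exprS mulrC; apply: eigT1; exact: he.
by apply: eigZ; rewrite addSn exprS mulrC; apply: eigT1; exact: he.
Qed.


Definition F (e : 'cV[k]_2) : 'M[k]_(hdim M, hdim M * 2) :=
  \matrix_(i, r) (((pr r).1 == i)%:R * e (pr r).2 0).

Lemma trF (u : 'cV[k]_(hdim M)) e : u^T *m F e = (kron u e)^T.
Proof.
apply/matrixP => i r; rewrite !mxE (bigD1 (pr r).1) //= big1 => [|c hc]; last first.
  by rewrite !mxE eq_sym (negbTE hc) mul0r mulr0.
by rewrite !mxE eqxx mul1r addr0 !ord1.
Qed.

Lemma sumF : (F e0)^T *m F e0 + (F e1)^T *m F e1 = 1%:M.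
Proof.
apply/matrixP => r r'; rewrite !mxE.
have hs e : \sum_j (F e)^T r j * F e j r' =
    ((pr r).1 == (pr r').1)%:R * (e (pr r).2 0 * e (pr r').2 0).
  rewrite (bigD1 (pr r).1) //= big1 => [|c hc]; last by rewrite !mxE eq_sym (negbTE hc) !mul0r.
  by rewrite !mxE eqxx addr0 mul1r eq_sym; ring.
rewrite !hs -mulrDr -(inj_eq (@pr_inj _ _)).
case: (pr r) (pr r') => [i1 a1] [i2 a2] /=.
rewrite xpair_eqE.
case: (i1 == i2); rewrite /= ?mul0r ?mul1r //.
by case: (ord2E a1) => ->; case: (ord2E a2) => ->; rewrite !mxE /=;
   rewrite ?mulr1 ?mulr0 ?addr0 ?add0r.
Qed.

Definition inS (S : seq (str k (hdim T))) (z : 'cV[k]_(hdim M * 2)) :=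
  (z^T <= spanS S)%MS.

Lemma inS_add S z1 z2 : inS S z1 -> inS S z2 -> inS S (z1 + z2).
Proof. by rewrite /inS linearD /=; apply: addmx_sub. Qed.
Lemma inS_scale S c z : inS S z -> inS S (c *: z).
Proof. by rewrite /inS linearZ /=; apply: scalemx_sub. Qed.
Lemma inS_sub S z1 z2 : inS S z1 -> inS S z2 -> inS S (z1 - z2).
Proof. by move=> h1 h2; apply: inS_add h1 _; rewrite -scaleN1r; apply: inS_scale. Qed.

Lemma col_in S (s' : str k (hdim T)) n : s' \in S -> (n < s'.1.2)%N ->
  inS S (pw (hx T) n s'.1.1).
Proof.
move=> hs hn; apply: submx_trans (spanS_mem hs).
have -> : (pw (hx T) n s'.1.1)^T = row (Ordinal hn) (strmx s')^T.
  by apply/matrixP => i j; rewrite !mxE ord1.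
exact: row_sub.
Qed.

Lemma solveX n (X Y : 'cV[k]_n) (al b c : k) : b - c * al != 0 ->
  X = (b - c * al)^-1 *: (b *: (X + al *: Y) - al *: (c *: X + b *: Y)).
Proof.
move=> hD.
have -> : b *: (X + al *: Y) - al *: (c *: X + b *: Y) = (b - c * al) *: X.
  rewrite !scalerDr !scalerA scalerBl (mulrC al b) (mulrC al c) opprD addrACA.
  by rewrite subrr addr0.
by rewrite scalerA mulVf // scale1r.
Qed.
Lemma solveY n (X Y : 'cV[k]_n) (al b c : k) : b - c * al != 0 ->
  Y = (b - c * al)^-1 *: ((c *: X + b *: Y) - c *: (X + al *: Y)).
Proof.
move=> hD.
have -> : (c *: X + b *: Y) - c *: (X + al *: Y) = (b - c * al) *: Y.
  rewrite !scalerDr !scalerA scalerBl opprD addrACA subrr add0r.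
  by [].
by rewrite scalerA mulVf // scale1r.
Qed.
Lemma formB n (X Y : 'cV[k]_n) (c q r : k) :
  c *: (X + q *: Y) - r *: Y = c *: X + (c * q - r) *: Y.
Proof. by rewrite scalerDr scalerA scalerBl addrA. Qed.

Lemma kid_span (s : str k (hdim M)) : p != 0 -> good chi s -> (0 < s.1.2)%N ->
  qn s.1.2 != 0 ->
  forall j, (j < s.1.2)%N ->
  inS (kids s) (kron (pw x j s.1.1) e0) /\ inS (kids s) (kron (pw x j s.1.1) e1).
Proof.
case: s => [[v t] w] hp [/= ht _] /= t0 hq; case: t t0 ht hq => // t' _ ht hq.
have k1 : kid1 (v, t'.+1, w) \in kids (v, t'.+1, w) by rewrite mem_head.
have k2 : (0 < t')%N -> kid2 (v, t'.+1, w) \in kids (v, t'.+1, w).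
  by move=> h0; rewrite /kids (_ : (1 < t'.+1)%N = true) // in_cons mem_seq1 eqxx orbT.
have hA n : (n < t'.+2)%N -> inS (kids (v, t'.+1, w))
     (kron (pw x n v) e0 + qn n *: kron (pw x n.-1 v) e1).
  by move=> hn; rewrite -pwT0; apply: (col_in k1).
have hB n : (n < t')%N -> inS (kids (v, t'.+1, w))
     (p ^+ t' *: kron (pw x n.+1 v) e0 + (p ^+ t' * qn n - qn t' * p ^+ n) *: kron (pw x n v) e1).
  move=> hn; rewrite -formB -pwT2.
  have := col_in (k2 (leq_ltn_trans (leq0n n) hn)) (n := n) hn.
  by [].
have hD n : (p ^+ t' * qn n - qn t' * p ^+ n) - p ^+ t' * qn n.+1 != 0.
  have -> : (p ^+ t' * qn n - qn t' * p ^+ n) - p ^+ t' * qn n.+1 = - (p ^+ n * qn t'.+1).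
    by rewrite !qnSr; ring.
  by rewrite oppr_eq0 mulf_neq0 // expf_neq0.
move=> j hj; split.
  case: j hj => [|j] hj; first by have := hA 0%N isT; rewrite qn0 scale0r addr0.
  have hj' : (j < t')%N by [].
  rewrite (@solveX _ (kron (pw x j.+1 v) e0) (kron (pw x j v) e1) _ _ _ (hD j)).
  apply: inS_scale; apply: inS_sub; apply: inS_scale.
    by apply: (hA j.+1); rewrite ltnS ltnW.
  exact: hB.
case: (ltnP j t') => hj'.
  rewrite (@solveY _ (kron (pw x j.+1 v) e0) (kron (pw x j v) e1) _ _ _ (hD j)).
  apply: inS_scale; apply: inS_sub; first exact: hB.
  by apply: inS_scale; apply: (hA j.+1); rewrite ltnS ltnW.
have -> : j = t' by apply/eqP; rewrite eqn_leq hj'; rewrite ltnS in hj; rewrite hj.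
have := hA t'.+1 (ltnSn _); rewrite ht kron0l add0r /= => h.
by rewrite -[kron _ _]scale1r -(mulVf hq) -scalerA; apply: inS_scale.
Qed.

Lemma spanS_mulP (S : seq (str k (hdim M))) m (Fm : 'M[k]_(hdim M, m)) q (X : 'M[k]_(q, m)) :
  (forall s, s \in S -> ((strmx s)^T *m Fm <= X)%MS) -> (spanS S *m Fm <= X)%MS.
Proof.
elim: S => [|s S IH] h; first by rewrite spanS_nil mul0mx sub0mx.
rewrite spanS_cons addsmxMr addsmx_sub.
rewrite (eqmxMr _ (genmxE _)) h ?mem_head //=.
by apply: IH => s' hs'; apply: h; rewrite in_cons hs' orbT.
Qed.

Lemma span_step (S : seq (str k (hdim M))) : p != 0 ->
  (forall s, s \in S -> [/\ good chi s, (0 < s.1.2)%N & qn s.1.2 != 0]) ->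
  (1%:M <= spanS S)%MS -> (1%:M <= spanS (flatten (map kids S)))%MS.
Proof.
move=> hp hS h1.
have hF e : e = e0 \/ e = e1 -> (F e <= spanS (flatten (map kids S)))%MS.
  move=> he; apply: submx_trans (_ : (spanS S *m F e <= _)%MS).
    by rewrite -{1}[F e]mul1mx submxMr.
  apply: spanS_mulP => s hs; apply/row_subP => j.
  have [gs t0 hq] := hS s hs.
  rewrite row_mul.
  have -> : row j (strmx s)^T = (pw x j s.1.1)^T.
    by apply/matrixP => i c; rewrite !mxE ord1.
  rewrite trF.
  have [i0 i1] := kid_span hp gs t0 hq (ltn_ord j).
  have sub : (spanS (kids s) <= spanS (flatten (map kids S)))%MS.
    apply: spanS_subset => z hz; apply/flattenP; exists (kids s) => //.
    by apply/mapP; exists s.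
  by case: he => ->; [apply: submx_trans i0 sub | apply: submx_trans i1 sub].
rewrite -sumF; apply: addmx_sub; apply: submx_trans (submxMl _ _) _.
  exact: hF (or_introl erefl).
exact: hF (or_intror erefl).
Qed.

End M.
End Step.


Section Main.
Variables (k : fieldType) (G : groupType) (a : G) (chi : G -> k).
Local Notation V := (Vmod chi 2 (@eps k G)).
Local Notation p := (chi a).

Definition tw n (s : str k n) : nat * nat := (s.1.2, s.2).

Lemma hdim_pow m : hdim (htpow a chi V m) = (2 ^ m)%N.
Proof. by elim: m => // m IH; rewrite /= IH expnSr. Qed.

Lemma map_kids M (s : str k (hdim M)) : map (@tw _) (kids a chi s) = kidsN (tw s).
Proof. by rewrite /kids /kidsN /tw; case: ifP. Qed.

Lemma strings m : p != 0 -> (forall n, (0 < n <= m)%N -> p ^+ n != 1) ->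
  exists S : seq (str k (hdim (htpow a chi V m))),
    [/\ (forall s, s \in S -> good chi s), (1%:M <= spanS S)%MS & map (@tw _) S = TW m].
Proof.
move=> hp; elim: m => [|m IH] hm.
  pose v : 'cV[k]_1 := 1%:M.
  have hx0 : hx (htpow a chi V 0) = 0.
    by apply/matrixP => i j; rewrite !ord1 !mxE.
  have ha g : hact (htpow a chi V 0) g = 1%:M.
    by apply/matrixP => i j; rewrite !ord1 !mxE /= /eps mulr1.
  exists [:: (v, 1%N, 0%N)]; split => //.
    have h1 : pw (hx (htpow a chi V 0)) 1 v = 0 by rewrite pwS; change (hx (htpow a chi V 0) *m v = 0); rewrite hx0 mul0mx.
    move=> s; rewrite mem_seq1 => /eqP -> {s}; split; first exact: h1.
    move=> g [|j].
      by change (hact (htpow a chi V 0) g *m v = chi g ^+ 0 *: v); rewrite ha mul1mx expr0 scale1r.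
    change (hact (htpow a chi V 0) g *m pw (hx (htpow a chi V 0)) j.+1 v = chi g ^+ j.+1 *: pw (hx (htpow a chi V 0)) j.+1 v).
    by rewrite (pw_ge h1 (_ : (1 <= j.+1)%N)) // mulmx0 scaler0.
  rewrite spanS_cons; apply: submx_trans (addsmxSl _ _); rewrite genmxE.
  have -> : (strmx (M := htpow a chi V 0) (v, 1%N, 0%N))^T = 1%:M.
    by apply/matrixP => i j; rewrite !ord1 !mxE.
  exact: submx_refl.
have [S [gS sS mS]] : exists S : seq (str k (hdim (htpow a chi V m))),
    [/\ (forall s, s \in S -> good chi s), (1%:M <= spanS S)%MS & map (@tw _) S = TW m].
  by apply: IH => n /andP [n0 nm]; apply: hm; rewrite n0 /= ltnW.
exists (flatten (map (kids a chi (M := htpow a chi V m)) S)); split.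
- move=> s' /flattenP [l /mapP [s hs ->]].
  rewrite /kids in_cons => /orP [/eqP -> | ]; first exact: good_kid1 (gS s hs).
  by case: ifP => // _; rewrite mem_seq1 => /eqP ->; apply: good_kid2 (gS s hs).
- apply: span_step => // s hs; split; first exact: gS.
    have : tw s \in TW m by rewrite -mS; apply: map_f.
    by move/TW_bound => /andP [].
  have : tw s \in TW m by rewrite -mS; apply: map_f.
  move/TW_bound => /andP [t0 tm].
  apply/eqP => h0; have := subrX1 p s.1.2.
  rewrite /qn in h0; rewrite h0 mulr0 => /eqP; rewrite subr_eq0 => /eqP e.
  by have := hm s.1.2; rewrite t0 tm e eqxx => /(_ isT).
- rewrite map_flatten -map_comp.
  rewrite (eq_map (g := kidsN \o (@tw _))); last by move=> s /=; apply: map_kids.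
  by rewrite map_comp mS.
Qed.

End Main.


Lemma hdim_dsum_seq (k : fieldType) (G : groupType) (Ns : seq (hmod k G)) :
  hdim (hdsum_seq Ns) = sumn (map (@hdim k G) Ns).
Proof. by elim: Ns => //= N Ns ->. Qed.

Lemma hdim_copies (k : fieldType) (G : groupType) c (N : hmod k G) :
  hdim (hcopies c N) = (c * hdim N)%N.
Proof. by elim: c => //= c IH; rewrite /hcopies /= in IH *; rewrite IH mulSn. Qed.

Theorem lemma4p2 (k : closedFieldType) (G : groupType) (a : G) (chi : G -> k)
    (m : nat) :
  [pchar k] =i pred0 ->
  (forall g : G, (a * g)%g = (g * a)%g) ->
  is_char chi ->
  chi a != 1 ->
  (* m < |q| where q = chi^{-1}(a): q^n <> 1 for 1 <= n <= m *)
  (forall n : nat, (0 < n <= m)%N -> ((chi a)^-1) ^+ n != 1) ->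
  hiso (htpow a chi (Vmod chi 2 (@eps k G)) m)
       (hdsum_seq
          [seq hcopies (((m - 2 * i + 1) * 'C(m, i)) %/ (m - i + 1))%N
                       (Vmod chi (m + 1 - 2 * i)%N (fun g => chi g ^+ i))
          | i <- iota 0 (m./2).+1]).
Proof.
move=> _ _ [_ hnz] _ hq.
have hp : chi a != 0 := hnz a.
have hm : forall n, (0 < n <= m)%N -> chi a ^+ n != 1.
  by move=> n hn; have := hq n hn; rewrite exprVn invr_eq1.
have [S [gS sS mS]] := strings hp hm.
set M := htpow a chi (Vmod chi 2 (@eps k G)) m.
set L := iota 0 (m./2).+1.
pose SS i := [seq s <- S | tw s == ((m + 1 - 2 * i)%N, i)].
have hL i : i \in L -> (i.*2 <= m)%N.
  by rewrite mem_iota add0n ltnS geq_half_double.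
have cntS i : (i.*2 <= m)%N -> count_mem ((m + 1 - 2 * i)%N, i) (TW m) = bal m i.
  move=> h; rewrite cnt_TW /fc.
  have -> : ((m + 1 - 2 * i)%N + i.*2 == m.+1) && (i.*2 <= m)%N by apply/andP; split => //; apply/eqP; lia.
  by [].
have key : forall i, i \in L -> exists Q : 'M_(hdim M, hdim (hcopies (((m - 2 * i + 1) * 'C(m, i)) %/ (m - i + 1))%N
                       (Vmod chi (m + 1 - 2 * i)%N (fun g => chi g ^+ i)))),
    intertw Q /\ (spanS (SS i) <= Q^T)%MS.
  move=> i hi.
  have hsz : size (SS i) = (((m - 2 * i + 1) * 'C(m, i)) %/ (m - i + 1))%N.
    rewrite size_filter bal_div ?hL // -cntS ?hL // -mS count_map.
    by apply: eq_count => s.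
  rewrite -hsz; apply: copies_ex => s; rewrite mem_filter => /andP [/eqP e hs].
  by split; [exact: gS | move: e; rewrite /tw => -[-> ->]].
have [Q [hQ sQ]] := seqs_ex key.
apply: (final_iso hQ).
  apply: submx_trans sS (submx_trans _ sQ).
  apply: spanS_subset => s hs.
  have htw : tw s \in TW m by rewrite -mS; apply: map_f.
  have [h1 h2] := TW_form htw; rewrite /= -!muln2 in h1 h2.
  apply/flattenP; exists (SS s.2); last first.
    rewrite mem_filter hs andbT /tw; apply/eqP; congr (_, _); move: (s.1.2) (s.2) h1 h2 => x y h1 h2; lia.
  apply/mapP; exists s.2 => //.
  by rewrite /L mem_iota add0n ltnS geq_half_double -muln2.
rewrite hdim_pow hdim_dsum_seq -sum_TW.
rewrite (@sumn_keys _ [seq ((m + 1 - 2 * i)%N, i) | i <- L]).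
- rewrite -!map_comp; congr sumn; apply/eq_in_map => i hi /=.
  by rewrite hdim_copies cntS ?hL // bal_div ?hL.
- rewrite map_inj_uniq ?iota_uniq //.
  by move=> i j [].
- move=> q hq'; have [h1 h2] := TW_form hq'.
  apply/mapP; exists q.2; first by rewrite mem_iota add0n ltnS geq_half_double.
  by case: q hq' h1 h2 => t w /= _ h1 h2; rewrite -!muln2 in h1 h2; congr (_, _); lia.
Qed.
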